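(* For every detection predicate $\psi:\mathbb{N}^{\Sigma}\to\{0,1\}$ there exists a leaderless CRD that haltingly decides $\psi$ (under a weakly fair scheduler) whose halting runtime is $O(\log n)$. Moreover, the CRD is designed so that all molecules in the halting configuration are voters.
   Context: Detection predicate: for $\mathbf{x}\in\mathbb{N}^{\Sigma}$ let $\mathbf{x}_\downarrow\in\{0,1\}^{\Sigma}$ with $\mathbf{x}_\downarrow(A)=1$ iff $\mathbf{x}(A)>0$; $\psi$ is a detection predicate if $\psi(\mathbf{x})=\psi(\mathbf{x}_\downarrow)$ for all $\mathbf{x}$. CRN model: $\Pi=(\mathcal{S},\mathcal{R})$, finite species set, finite reaction set $\mathcal{R}\subset\mathbb{N}^{\mathcal{S}}\times\mathbb{N}^{\mathcal{S}}$; reactions $(\mathbf{r},\mathbf{p})$ with $\|\mathbf{r}\|_1\in\{1,2\}$, $\|\mathbf{r}\|_1\le\|\mathbf{p}\|_1$; every $\mathbf{r}$ with $1\le\|\mathbf{r}\|_1\le2$ has a nonempty set $\mathcal{R}(\mathbf{r})$ of reactions; void reactions ($\mathbf{r}=\mathbf{p}$) alone in their $\mathcal{R}(\mathbf{r})$; $\operatorname{NV}(\mathcal{R})$ non-void; finite density. Configurations $\mathbf{c}\in\mathbb{N}^{\mathcal{S}}$, $\|\mathbf{c}\|_1\ge1$; applicability $\mathbf{r}\le\mathbf{c}$, result $\mathbf{c}-\mathbf{r}+\mathbf{p}$; reachability $\stackrel{*}{\rightharpoonup}$; $\mathrm{halt}(Z)=\{\mathbf{c}\in Z:\mathbf{c}\stackrel{*}{\rightharpoonup}\mathbf{c}'\Rightarrow\mathbf{c}'=\mathbf{c}\}$.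 Weakly fair execution $\langle\mathbf{c}^t,\alpha^t\rangle$: every reaction applicable at step $t$ is later scheduled or becomes inapplicable. Halts into $Z$ at the first $t$ with $\mathbf{c}^t\in\mathrm{halt}(Z)$. CRD: input species $\Sigma\subset\mathcal{S}$, disjoint voters $\Upsilon_0,\Upsilon_1$, fuel $F\in\mathcal{S}\setminus\Sigma$, context $\mathbf{k}$ (leaderless: $\mathbf{k}=\mathbf{0}$); valid initial configurations agree with $\mathbf{k}$ off $\Sigma\cup\{F\}$ and have $\mathbf{c}^0(F)\ge1$ (arbitrary fuel count); $\mathcal{D}_v=\{\mathbf{c}:\mathbf{c}(\Upsilon_v)>0,\mathbf{c}(\Upsilon_{1-v})=0\}$; haltingly decides $\psi$ if for every $\mathbf{x}$, every weakly fair execution from every valid $\mathbf{c}^0$ with $\mathbf{c}^0|_\Sigma=\mathbf{x}$ halts into $\mathcal{D}_{\psi(\mathbf{x})}$. Runtime: stochastic scheduler with volume $\varphi=\Theta(n)$, $n=\|\mathbf{c}^0\|_1$; propensity $\pi_{\mathbf{c}}(\alpha)=\mathbf{c}(A)/|\mathcal{R}(\mathbf{r})|$ ($\mathbf{r}=A$), $\frac1\varphi\binom{\mathbf{c}(A)}2/|\mathcal{R}(\mathbf{r})|$ ($\mathbf{r}=2A$), $\frac1\varphi\mathbf{c}(A)\mathbf{c}(B)/|\mathcal{R}(\mathbf{r})|$ ($\mathbf{r}=A+B$); step time span $1/\pi_{\mathbf{c}}(\mathcal{R})$. $\tau(\eta,t,Q)$ = least $s>t$ with $\alpha^{s-1}\in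 Q$ or every reaction of $Q$ inapplicable at some step in $[t,s]$. Runtime policy $\varrho(\mathbf{c})\subseteq\operatorname{NV}(\mathcal{R})$; skipping policy $\sigma(t)\ge t$; rounds $t(0)=0$, $t_e(i)=\sigma(t(i))$, $\mathbf{e}^i=\mathbf{c}^{t_e(i)}$, $t(i+1)=\tau(\eta,t_e(i),\varrho(\mathbf{e}^i))$; $\operatorname{TC}^{\varrho}(\mathbf{c})$ = expected total time span of the steps before $\tau(\eta_r,0,\varrho(\mathbf{c}))$ of a stochastic execution $\eta_r$ from $\mathbf{c}$; $\operatorname{RT}_{\mathrm{halt}}^{\varrho,\sigma}(\eta)=\sum_{i<i^*}\operatorname{TC}^{\varrho}(\mathbf{e}^i)$ with $i^*=\min\{i:t(i)\ge t^*\}$, $t^*$ the halting step; halting runtime $\operatorname{RT}_{\mathrm{halt}}^{\Pi}(n)=\min_\varrho\max_{\eta,\sigma}\operatorname{RT}_{\mathrm{halt}}^{\varrho,\sigma}(\eta)$ over weakly fair executions from valid initial configurations of molecular count $n$ and all skipping policies. *)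

(* Defs.v *)
From HB Require Import structures.
From mathcomp Require Import all_boot all_order all_algebra.
From mathcomp Require Import boolp classical_sets reals constructive_ereal ereal exp.
From mathcomp Require Import Rstruct Rstruct_topology.
From Stdlib Require Import ClassicalEpsilon.

Set Implicit Arguments.
Unset Strict Implicit.
Unset Printing Implicit Defensive.

Import Order.TTheory GRing.Theory Num.Theory.

Notation real := Rdefinitions.R.

Definition vec (S : finType) := {ffun S -> nat}.
Definition rxn (S : finType) := (vec S * vec S)%type.

Definition msize (S : finType) (c : vec S) : nat := (\sum_(X : S) c X)%N.

Definition cnt (S : finType) (Y : {set S}) (c : vec S) : nat :=
  (\sum_(X in Y) c X)%N.

(* A CRN is given by its (finite) reaction set, listed as a sequence.
   Reactions are referred to by their index in this list. *)
Definition rx (S : finType) (Rs : seq (rxn S)) (j : 'I_(size Rs)) : rxn S :=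
  tnth (in_tuple Rs) j.

Definition applicable (S : finType) (a : rxn S) (c : vec S) : bool :=
  [forall X, a.1 X <= c X].

Definition apply_rxn (S : finType) (a : rxn S) (c : vec S) : vec S :=
  [ffun X => c X - a.1 X + a.2 X].

Definition is_void (S : finType) (a : rxn S) : bool := a.1 == a.2.

Definition step (S : finType) (Rs : seq (rxn S)) (c c' : vec S) : Prop :=
  exists2 a, a \in Rs & applicable a c /\ c' = apply_rxn a c.

Inductive reach (S : finType) (Rs : seq (rxn S)) : vec S -> vec S -> Prop :=
  | reach_refl c : reach Rs c c
  | reach_step c c' c'' : step Rs c c' -> reach Rs c' c'' -> reach Rs c c''.

(* c \in halt(Z) is (c \in Z /\ halted Rs c) *)
Definition halted (S : finType) (Rs : seq (rxn S)) (c : vec S) : Prop :=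
  forall c', reach Rs c c' -> c' = c.

Definition finite_density (S : finType) (Rs : seq (rxn S)) : Prop :=
  exists d : nat, forall c c', reach Rs c c' -> msize c' <= d * msize c.

Definition wf_CRN (S : finType) (Rs : seq (rxn S)) : Prop :=
  [/\ uniq Rs,
      (forall a, a \in Rs -> (1 <= msize a.1 <= 2) && (msize a.1 <= msize a.2)),
      (forall r : vec S, 1 <= msize r <= 2 -> exists p, (r, p) \in Rs),
      (forall r p, (r, r) \in Rs -> (r, p) \in Rs -> p = r)
    & finite_density Rs].

Definition is_exec (S : finType) (Rs : seq (rxn S)) (c0 : vec S)
    (cs : nat -> vec S) (als : nat -> 'I_(size Rs)) : Prop :=
  cs 0%N = c0 /\
  forall t, applicable (rx (als t)) (cs t) /\ cs t.+1 = apply_rxn (rx (als t)) (cs t).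

Definition weakly_fair (S : finType) (Rs : seq (rxn S))
    (cs : nat -> vec S) (als : nat -> 'I_(size Rs)) : Prop :=
  forall t (a : 'I_(size Rs)), applicable (rx a) (cs t) ->
    exists2 s, (t <= s)%N & (als s = a \/ ~~ applicable (rx a) (cs s)).

(* least natural number satisfying P (meaningful when one exists) *)
Definition least (P : nat -> Prop) : nat :=
  epsilon (inhabits 0%N) (fun n => P n /\ forall m, P m -> (n <= m)%N).

(* The schedule is given as an option-valued function so that it can be
   used both for infinite executions and for finite prefixes. *)
Definition tau_cond (S : finType) (Rs : seq (rxn S)) (cs : nat -> vec S)
    (als : nat -> option 'I_(size Rs)) (t : nat) (Q : {set 'I_(size Rs)})
    (s : nat) : Prop :=
  (t < s)%N /\
  ((exists2 a, als s.-1 = Some a & a \in Q) \/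
   (forall a, a \in Q -> exists2 u, (t <= u <= s)%N & ~~ applicable (rx a) (cs u))).

Definition tau (S : finType) (Rs : seq (rxn S)) (cs : nat -> vec S)
    (als : nat -> 'I_(size Rs)) (t : nat) (Q : {set 'I_(size Rs)}) : nat :=
  least (tau_cond cs (fun u => Some (als u)) t Q).

(* propensity of reaction j in configuration c with volume v:
   for r = A : c(A)/|R(r)| ; r = 2A : (1/v) binom(c(A),2)/|R(r)| ;
   r = A+B : (1/v) c(A)c(B)/|R(r)| (uniformly: prod_X binom(c X, r X)). *)
Definition propensity (S : finType) (Rs : seq (rxn S)) (v : real) (c : vec S)
    (j : 'I_(size Rs)) : real :=
  let r := (rx j).1 in
  ((\prod_(X : S) ('C(c X, r X))%:R) / (count (fun b : rxn S => b.1 == r) Rs)%:R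
    / (if msize r == 2 then v else 1))%R.

Definition tot_propensity (S : finType) (Rs : seq (rxn S)) (v : real) (c : vec S) : real :=
  (\sum_(j < size Rs) propensity v c j)%R.

Definition cfg_at (S : finType) (Rs : seq (rxn S)) (c : vec S)
    (l : seq 'I_(size Rs)) (u : nat) : vec S :=
  foldl (fun c' a => apply_rxn (rx a) c') c (take u l).

Fixpoint path_prob (S : finType) (Rs : seq (rxn S)) (v : real) (c : vec S)
    (l : seq 'I_(size Rs)) : real :=
  match l with
  | [::] => 1%R
  | a :: l' => (propensity v c a / tot_propensity Rs v c * path_prob v (apply_rxn (rx a) c) l')%R
  end.

(* TC^rho(c): expected total time span (step s at configuration c^s has
   time span 1/pi_{c^s}(R)) of the steps s < tau(eta_r, 0, rho(c)) of a
   stochastic execution eta_r from c. Computed as the supremum of the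
   partial sums over the steps s < N, each step summed over all
   schedule prefixes of length s. *)
Definition TC (S : finType) (Rs : seq (rxn S)) (v : real)
    (rho : vec S -> {set 'I_(size Rs)}) (c : vec S) : \bar real :=
  ereal_sup [set ((\sum_(s < N) \sum_(w : s.-tuple 'I_(size Rs))
       (if `[< forall s', (s' <= s)%N ->
               ~ tau_cond (cfg_at c w) (onth w) 0%N (rho c) s' >]
        then path_prob v c w / tot_propensity Rs v (cfg_at c w s)
        else 0))%R)%:E | N in [set: nat]].

Definition runtime_policy (S : finType) (Rs : seq (rxn S))
    (rho : vec S -> {set 'I_(size Rs)}) : Prop :=
  forall c a, a \in rho c -> ~~ is_void (rx a).

Definition skipping_policy (sigma : nat -> nat) : Prop :=
  forall t, (t <= sigma t)%N.

Fixpoint round_t (S : finType) (Rs : seq (rxn S))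
    (rho : vec S -> {set 'I_(size Rs)}) (sigma : nat -> nat)
    (cs : nat -> vec S) (als : nat -> 'I_(size Rs)) (i : nat) : nat :=
  match i with
  | 0 => 0%N
  | i'.+1 => let te := sigma (round_t rho sigma cs als i') in
             tau cs als te (rho (cs te))
  end.

Definition halting_step (S : finType) (Rs : seq (rxn S)) (cs : nat -> vec S) : nat :=
  least (fun t => halted Rs (cs t)).

Definition RT_exec (S : finType) (Rs : seq (rxn S)) (v : real)
    (rho : vec S -> {set 'I_(size Rs)}) (sigma : nat -> nat)
    (cs : nat -> vec S) (als : nat -> 'I_(size Rs)) : \bar real :=
  let istar := least (fun i => (halting_step Rs cs <= round_t rho sigma cs als i)%N) in
  (\sum_(i < istar) TC v rho (cs (sigma (round_t rho sigma cs als i))))%E.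

(* Input species are the image of the injection iota : Sig -> S; fuel F.
   Leaderless (context 0): valid initial configurations vanish outside
   Sigma and F, and contain at least one F. *)
Definition valid_init (Sig S : finType) (iota : Sig -> S) (F : S) (c0 : vec S) : Prop :=
  (forall X, (forall s, X != iota s) -> X != F -> c0 X = 0%N) /\ (0 < c0 F)%N.

Definition input_of (Sig S : finType) (iota : Sig -> S) (c0 : vec S) : {ffun Sig -> nat} :=
  [ffun s => c0 (iota s)].

Definition in_D (S : finType) (Y0 Y1 : {set S}) (b : bool) (c : vec S) : bool :=
  if b then (0 < cnt Y1 c)%N && (cnt Y0 c == 0%N)
  else (0 < cnt Y0 c)%N && (cnt Y1 c == 0%N).

Definition haltingly_decides (Sig S : finType) (Rs : seq (rxn S)) (iota : Sig -> S)
    (F : S) (Y0 Y1 : {set S}) (psi : {ffun Sig -> nat} -> bool) : Prop :=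
  forall c0 cs (als : nat -> 'I_(size Rs)), valid_init iota F c0 -> is_exec c0 cs als -> weakly_fair cs als ->
    exists t, in_D Y0 Y1 (psi (input_of iota c0)) (cs t) /\ halted Rs (cs t).

Definition halts_with_only_voters (Sig S : finType) (Rs : seq (rxn S)) (iota : Sig -> S)
    (F : S) (Y0 Y1 : {set S}) : Prop :=
  forall c0 cs (als : nat -> 'I_(size Rs)), valid_init iota F c0 -> is_exec c0 cs als -> weakly_fair cs als ->
    forall X, (0 < cs (halting_step Rs cs) X)%N -> X \in Y0 :|: Y1.

(* halting runtime RT_halt(n) for volume function vol (volume vol n when
   the initial molecular count is n) *)
Definition RT_halt (Sig S : finType) (Rs : seq (rxn S)) (iota : Sig -> S) (F : S)
    (vol : nat -> real) (n : nat) : \bar real :=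
  ereal_inf [set y | exists rho : vec S -> {set 'I_(size Rs)}, runtime_policy rho /\
    y = ereal_sup [set z | exists (c0 : vec S) (cs : nat -> vec S)
                                   (als : nat -> 'I_(size Rs)) (sigma : nat -> nat),
          valid_init iota F c0 /\ msize c0 = n /\ is_exec c0 cs als /\
          weakly_fair cs als /\ skipping_policy sigma /\
          z = RT_exec (vol n) rho sigma cs als]].

Definition volume_Theta_n (vol : nat -> real) : Prop :=
  exists a b : real, (0 < a)%R /\ (0 < b)%R /\
    forall n : nat, (1 <= n)%N -> (a * n%:R <= vol n <= b * n%:R)%R.

Definition detection (Sig : finType) (psi : {ffun Sig -> nat} -> bool) : Prop :=
  forall x : {ffun Sig -> nat}, psi x = psi [ffun s => nat_of_bool (0 < x s)%N].

(* Main.v *)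
Require Import Defs.
From HB Require Import structures.
From mathcomp Require Import all_boot all_order all_algebra.
From mathcomp Require Import boolp classical_sets reals constructive_ereal ereal exp.
From mathcomp Require Import Rstruct Rstruct_topology.

From mathcomp Require Import zify ring lra.
From Stdlib Require Import ClassicalEpsilon.

Module M1.
Set Implicit Arguments.
Unset Strict Implicit.
Unset Printing Implicit Defensive.
Import Order.TTheory GRing.Theory Num.Theory.

Lemma least_spec (P : nat -> Prop) : (exists n, P n) ->
  P (least P) /\ forall m, P m -> (least P <= m)%N.
Proof.
move=> ex.
have ex' : exists n, `[< P n >] by case: ex => n Pn; exists n; apply/asboolP.
have : exists n, P n /\ forall m, P m -> (n <= m)%N.
  case: (ex_minnP ex') => n /asboolP Pn Hmin; exists n; split=> // m Pm.
  by apply: Hmin; apply/asboolP.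
exact: epsilon_spec.
Qed.

Section CRN.
Variable Sig : finType.
Definition Sp := {set Sig}.

Definition e1 (K : Sp) : vec Sp := [ffun X => nat_of_bool (X == K)].
Definition Ur (r : vec Sp) : {set Sig} := \bigcup_(K | (0 < r K)%N) K.
Definition gr (r : vec Sp) : vec Sp := [ffun X => if X == Ur r then msize r else 0%N].
Definition toN (f : {ffun Sp -> 'I_3}) : vec Sp := [ffun X => nat_of_ord (f X)].
Definition Lr : seq (vec Sp) :=
  [seq toN f | f <- enum [pred f : {ffun Sp -> 'I_3} | (1 <= msize (toN f) <= 2)%N]].
Definition Rs : seq (rxn Sp) := [seq (r, gr r) | r <- Lr].

Lemma toN_inj : injective toN.
Proof.
move=> f g H; apply/ffunP => X; apply: val_inj.
by have := congr1 (fun h : vec Sp => h X) H; rewrite /= !ffunE.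
Qed.

Lemma Lr_uniq : uniq Lr.
Proof. by rewrite map_inj_uniq ?enum_uniq //; exact: toN_inj. Qed.

Lemma Rs_uniq : uniq Rs.
Proof.
rewrite map_inj_uniq ?Lr_uniq // => r1 r2 H.
by have := congr1 fst H.
Qed.

Lemma le_msize (r : vec Sp) X : (r X <= msize r)%N.
Proof. by rewrite /msize (bigD1 X) //= leq_addr. Qed.

Lemma mem_Lr r : (r \in Lr) = (1 <= msize r <= 2)%N.
Proof.
apply/idP/idP.
  by case/mapP => f; rewrite mem_enum inE => Hf ->.
move=> Hr; apply/mapP.
have Hle : forall X, (r X < 3)%N.
  move=> X; case/andP: Hr => _ h1; exact: leq_ltn_trans (le_msize r X) (leq_ltn_trans h1 _).
exists [ffun X => Ordinal (Hle X)].
  rewrite mem_enum inE.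
  suff -> : toN [ffun X => Ordinal (Hle X)] = r by [].
  by apply/ffunP => X; rewrite !ffunE.
by apply/ffunP => X; rewrite !ffunE.
Qed.

Lemma mem_Rs a : a \in Rs -> a.2 = gr a.1 /\ a.1 \in Lr.
Proof. by case/mapP => r Hr ->. Qed.

Lemma rx_in (j : 'I_(size Rs)) : rx j \in Rs.
Proof. by rewrite /rx mem_tnth. Qed.

Lemma rx_2 (j : 'I_(size Rs)) : (rx j).2 = gr (rx j).1.
Proof. by case: (mem_Rs (rx_in j)). Qed.

Lemma count_Rs r : r \in Lr -> count (fun b : rxn Sp => b.1 == r) Rs = 1%N.
Proof.
move=> Hr; rewrite count_map.
have -> : count (preim (fun r0 => (r0, gr r0)) (fun b : rxn Sp => b.1 == r)) Lr
   = count_mem r Lr by apply: eq_count => x.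
by rewrite count_uniq_mem ?Lr_uniq // Hr.
Qed.

Lemma msize_cnt (c : vec Sp) : msize c = cnt [set: Sp] c.
Proof. by rewrite /cnt /msize; apply: eq_bigl => X; rewrite finset.in_setT. Qed.

Lemma cnt_split (Y : {set Sp}) c : msize c = (cnt Y c + cnt (~: Y) c)%N.
Proof.
rewrite /msize (bigID (mem Y)) /=; congr (_ + _)%N.
by apply: eq_bigl => X; rewrite finset.in_setC.
Qed.

Lemma cnt_le (Y : {set Sp}) (r c : vec Sp) : (forall X, r X <= c X)%N -> (cnt Y r <= cnt Y c)%N.
Proof. by move=> H; apply: leq_sum => X _. Qed.

Lemma applicableP (a : rxn Sp) c : applicable a c -> forall X, (a.1 X <= c X)%N.
Proof. by move/forallP. Qed.

Lemma cnt_apply (Y : {set Sp}) (a : rxn Sp) c : applicable a c ->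
  cnt Y (apply_rxn a c) = (cnt Y c - cnt Y a.1 + cnt Y a.2)%N.
Proof.
move=> /applicableP H.
have E : cnt Y (apply_rxn a c)
   = (\sum_(X in Y) (c X - a.1 X) + cnt Y a.2)%N.
  by rewrite /cnt -big_split; apply: eq_bigr => X _; rewrite ffunE.
have E2 : (\sum_(X in Y) (c X - a.1 X) + cnt Y a.1)%N = cnt Y c.
  by rewrite /cnt -big_split; apply: eq_bigr => X _; rewrite /= subnK.
rewrite E -E2; lia.
Qed.

Lemma cnt_single (Y : {set Sp}) K m :
  cnt Y [ffun X : Sp => if X == K then m else 0%N] = if K \in Y then m else 0%N.
Proof.
rewrite /cnt; case: (boolP (K \in Y)) => HK.
  rewrite (bigD1 K) //= ffunE eqxx big1 ?addn0 // => X /andP[_ HX].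
  by rewrite ffunE (negbTE HX).
rewrite big1 // => X HX; rewrite ffunE; case: eqP => // E.
by rewrite -E HX in HK.
Qed.

Lemma cnt_full (Y : {set Sp}) (r : vec Sp) : (forall X, (0 < r X)%N -> X \in Y) -> cnt Y r = msize r.
Proof.
move=> H; rewrite (cnt_split Y r).
suff -> : cnt (~: Y) r = 0%N by rewrite addn0.
rewrite /cnt big1 // => X; rewrite finset.in_setC => HX.
by case: (posnP (r X)) => // /H; rewrite (negbTE HX).
Qed.

Definition u (s : Sig) (c : vec Sp) := cnt [set K : Sp | s \notin K] c.

Lemma u_le s c : (u s c <= msize c)%N.
Proof. by rewrite (cnt_split [set K : Sp | s \notin K] c) leq_addr. Qed.

Lemma u_gr s r : u s (gr r) = if s \in Ur r then 0%N else msize r.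
Proof. by rewrite /u /gr cnt_single inE; case: (s \in Ur r). Qed.

Lemma u_notUr s r : s \notin Ur r -> u s r = msize r.
Proof.
move=> Hs; apply: cnt_full => X HX; rewrite inE.
apply: contra Hs => HsX; apply/finset.bigcupP; by exists X.
Qed.

Lemma msize_gr r : msize (gr r) = msize r.
Proof. by rewrite msize_cnt /gr cnt_single finset.in_setT. Qed.

Lemma gr_fix r : (forall s, s \in Ur r -> u s r = 0%N) -> gr r = r.
Proof.
move=> H.
have H1 : forall Y, Y != Ur r -> r Y = 0%N.
  move=> Y HY; case: (posnP (r Y)) => // Hpos; exfalso; apply/negP: HY; apply/negPn.
  rewrite finset.eqEsubset; apply/andP; split.
    by apply/fintype.subsetP => s Hs; apply/finset.bigcupP; exists Y.
  apply/fintype.subsetP => s Hs; have := H s Hs; rewrite /u /cnt => /eqP.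
  rewrite sum_nat_eq0 => /forallP /(_ Y); rewrite inE.
  case: (s \in Y) => //= /eqP E; by rewrite E in Hpos.
have Hm : msize r = r (Ur r).
  rewrite /msize (bigD1 (Ur r)) //= big1 ?addn0 // => Y /H1 //.
apply/ffunP => X; rewrite ffunE; case: eqP => [->|/eqP HX] //.
by rewrite H1.
Qed.

Lemma gr_nfix r s : s \in Ur r -> (0 < u s r)%N -> gr r != r.
Proof.
move=> Hs Hu; apply/eqP => E.
by have := u_gr s r; rewrite E Hs => E2; rewrite E2 in Hu.
Qed.

Lemma apply_void (a : rxn Sp) c : applicable a c -> a.2 = a.1 -> apply_rxn a c = c.
Proof.
move=> /applicableP H E; apply/ffunP => X; rewrite ffunE E subnK //.
Qed.

Section Step.
Variables (a : rxn Sp) (c : vec Sp).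
Hypothesis Ha : a \in Rs.
Hypothesis Hap : applicable a c.
Let c' := apply_rxn a c.
Let r := a.1.
Lemma a2 : a.2 = gr r.
Proof. by case: (mem_Rs Ha). Qed.

Lemma step_msize : msize c' = msize c.
Proof.
rewrite !msize_cnt /c' cnt_apply // a2 -!msize_cnt msize_gr.
have : (msize r <= msize c)%N.
  rewrite !msize_cnt; apply: cnt_le; exact: applicableP.
rewrite /r; lia.
Qed.

Lemma u_r_le s : (u s r <= u s c)%N.
Proof. apply: cnt_le; exact: applicableP. Qed.

Lemma step_u s : u s c' = (u s c - u s r + (if s \in Ur r then 0 else msize r))%N.
Proof. have := u_gr s r; rewrite /c' /u cnt_apply // a2 => ->. by []. Qed.

Lemma step_u_le s : (u s c' <= u s c)%N.
Proof.
rewrite step_u; have := u_r_le s; case: ifP => Hs.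
  lia.
rewrite -(u_notUr (negbT Hs)); lia.
Qed.

Lemma step_u_eq s : s \notin Ur r -> u s c' = u s c.
Proof.
move=> Hs; rewrite step_u (negbTE Hs) -(u_notUr Hs); have := u_r_le s; lia.
Qed.

Lemma Ur_known s : s \in Ur r -> (u s c < msize c)%N.
Proof.
case/finset.bigcupP => K HK HsK.
rewrite (cnt_split [set K : Sp | s \notin K] c) -/(u s c).
have : (c K <= cnt (~: [set K : Sp | s \notin K]) c)%N.
  by rewrite /cnt (bigD1 K) ?leq_addr // finset.in_setC inE HsK.
have := applicableP Hap K; rewrite -/r => h1 h2.
rewrite -[X in (X < _)%N]addn0 ltn_add2l; exact: leq_trans HK (leq_trans h1 h2).
Qed.

Lemma known_inv s : (u s c' < msize c')%N = (u s c < msize c)%N.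
Proof.
rewrite step_msize; case: (boolP (s \in Ur r)) => Hs.
  rewrite (Ur_known Hs); apply/idP; have := step_u_le s; have := Ur_known Hs; lia.
by rewrite step_u_eq.
Qed.

Lemma step_change : c' != c ->
  exists s, [/\ s \in Ur r, (u s c').+1 <= u s c & u s c < msize c]%N.
Proof.
move=> Hc.
have Hg : gr r != r.
  apply: contra Hc => /eqP E; apply/eqP; apply: apply_void => //; by rewrite a2 E.
have : [exists s, (s \in Ur r) && (u s r != 0%N)].
  apply: contraR Hg; rewrite negb_exists => /forallP H; apply/eqP; apply: gr_fix.
  by move=> s Hs; have := H s; rewrite Hs /= negbK => /eqP.
case/existsP => s /andP[Hs Hu]; exists s; split => //; last exact: Ur_known.
rewrite step_u Hs; have := u_r_le s; move: Hu; rewrite -lt0n; lia.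
Qed.

End Step.

Definition pot (c : vec Sp) := (\sum_(s : Sig) u s c)%N.

Lemma pot_le a c : a \in Rs -> applicable a c -> (pot (apply_rxn a c) <= pot c)%N.
Proof. by move=> Ha Hap; apply: leq_sum => s _; apply: step_u_le. Qed.

Lemma pot_lt a c : a \in Rs -> applicable a c -> apply_rxn a c != c ->
  (pot (apply_rxn a c) < pot c)%N.
Proof.
move=> Ha Hap Hc; case: (step_change Ha Hap Hc) => s [_ Hs _].
rewrite /pot (bigD1 s) //= [X in (_ < X)%N](bigD1 s) //=.
have : (\sum_(i | i != s) u i (apply_rxn a c) <= \sum_(i | i != s) u i c)%N.
  by apply: leq_sum => i _; apply: step_u_le.
lia.
Qed.

End CRN.

End M1.
Import M1.

Module M2.
Set Implicit Arguments.
Unset Strict Implicit.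
Unset Printing Implicit Defensive.
Import Order.TTheory GRing.Theory Num.Theory.

Section Exec.
Variable Sig : finType.
Local Notation Rs := (Rs Sig).
Local Notation Sp := (Sp Sig).

Lemma apply_eq_void (a : rxn Sp) c : applicable a c -> apply_rxn a c = c -> a.2 = a.1.
Proof.
move=> /applicableP H E; apply/ffunP => X.
have := congr1 (fun h : vec Sp => h X) E; rewrite /= ffunE.
have := H X; set y1 := c X; set y2 := a.1 X; set y3 := a.2 X; lia.
Qed.

Lemma index_of (a : rxn Sp) : a \in Rs -> exists j : 'I_(size Rs), rx j = a.
Proof.
move=> Ha; have : a \in in_tuple Rs by [].
by case/tnthP => j ->; exists j.
Qed.

Variables (c0 : vec Sp) (cs : nat -> vec Sp) (als : nat -> 'I_(size Rs)).
Hypothesis Hex : is_exec c0 cs als.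

Lemma exec_step t : applicable (rx (als t)) (cs t) /\ cs t.+1 = apply_rxn (rx (als t)) (cs t).
Proof. by case: Hex => _ /(_ t). Qed.

Lemma exec_msize t : msize (cs t) = msize c0.
Proof.
elim: t => [|t IH]; first by case: Hex => ->.
by case: (exec_step t) => Hap ->; rewrite step_msize // rx_in.
Qed.

Lemma exec_u_mono s t k : (u s (cs (t + k)) <= u s (cs t))%N.
Proof.
elim: k => [|k IH]; first by rewrite addn0.
rewrite addnS; case: (exec_step (t + k)) => Hap ->.
exact: leq_trans (step_u_le (rx_in _) Hap s) IH.
Qed.

Lemma exec_u_mono' s t t' : (t <= t')%N -> (u s (cs t') <= u s (cs t))%N.
Proof. by move/subnKC <-; apply: exec_u_mono. Qed.

Lemma exec_known s t : (u s (cs t) < msize (cs t))%N = (u s c0 < msize c0)%N.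
Proof.
elim: t => [|t IH]; first by case: Hex => ->.
by case: (exec_step t) => Hap ->; rewrite known_inv // rx_in.
Qed.

Lemma exec_pot_mono t t' : (t <= t')%N -> (pot (cs t') <= pot (cs t))%N.
Proof. by move=> H; apply: leq_sum => s _; apply: exec_u_mono'. Qed.

Lemma change_step t k : cs (t + k) != cs t ->
  exists t0, [/\ (t <= t0 < t + k)%N, cs t0 = cs t & cs t0.+1 != cs t0].
Proof.
elim: k => [|k IH]; first by rewrite addn0 eqxx.
rewrite addnS => H.
case: (eqVneq (cs (t + k)) (cs t)) => E.
  exists (t + k); split => //; first by rewrite leq_addr /= ltnS.
  by rewrite E.
case: (IH E) => t0 [/andP [H1 H2] H3 H4]; exists t0; split => //.
by rewrite H1 /= ltnS ltnW.
Qed.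

Lemma stabilize : exists T, forall t, (T <= t)%N -> cs t = cs T.
Proof.
suff H : forall k t, (pot (cs t) < k)%N -> exists T, forall t', (T <= t')%N -> cs t' = cs T.
  exact: (H (pot (cs 0)).+1 0%N).
elim=> [//|k IH] t Hk.
case: (pselect (exists t', (t <= t')%N /\ cs t' != cs t)) => [[t' [Ht' Hne]]|Hno].
  move: Hne; rewrite -(subnKC Ht') => Hne.
  case: (change_step Hne) => t0 [/andP[H1 _] H3 H4].
  apply: (IH t0.+1).
  case: (exec_step t0) => Hap E; rewrite E in H4 *.
  have := pot_lt (rx_in _) Hap H4; have := exec_pot_mono H1; lia.
exists t => t' Ht'; apply/eqP; apply: contraT => Hne; exfalso; apply: Hno.
by exists t'.
Qed.

Hypothesis Hfair : weakly_fair cs als.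

Lemma reach_const T c1 c2 : (forall t, (T <= t)%N -> cs t = cs T) ->
  reach Rs c1 c2 -> c1 = cs T -> c2 = cs T.
Proof.
move=> Hst; elim => [//|x x' x'' [a Ha [Hap ->]] _ IH] Ex; apply: IH.
rewrite Ex in Hap *.
apply/eqP; apply: contraT => Hne; exfalso.
case: (index_of Ha) => j Ej.
have Hap' : applicable (rx j) (cs T) by rewrite Ej.
case: (Hfair Hap') => s Hs [Es|Hna].
  have := Hst s.+1 (leqW Hs); case: (exec_step s) => _ ->.
  by rewrite Es Ej (Hst s Hs) => E; rewrite E eqxx in Hne.
by rewrite (Hst s Hs) Hap' in Hna.
Qed.

Lemma halt_exists : exists T, halted Rs (cs T) /\ forall t, (T <= t)%N -> cs t = cs T.
Proof.
case: stabilize => T HT; exists T; split => // c' Hr.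
exact: (reach_const HT Hr).
Qed.

End Exec.

Section Halted.
Variable Sig : finType.
Local Notation Rs := (Rs Sig).
Local Notation Sp := (Sp Sig).

Lemma halted_NV c (j : 'I_(size Rs)) : halted Rs c -> ~~ is_void (rx j) -> ~~ applicable (rx j) c.
Proof.
move=> Hh Hnv; apply/negP => Hap.
have Hr : reach Rs c (apply_rxn (rx j) c).
  apply: reach_step (reach_refl _ _); exists (rx j); [exact: rx_in | by split].
have := apply_eq_void Hap (Hh _ Hr) => E.
by move: Hnv; rewrite /is_void E eqxx.
Qed.

Lemma inU s (K : Sp) : (K \in [set K0 : Sp | s \notin K0]) = (s \notin K).
Proof. exact: (finset.in_set (fun K0 : Sp => s \notin K0)). Qed.

Definition pr (K1 K2 : Sp) : vec Sp :=
  [ffun X => ((if X == K1 then 1 else 0) + (if X == K2 then 1 else 0))%N].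

Lemma prC (K1 K2 : Sp) : pr K1 K2 = pr K2 K1.
Proof. by apply/ffunP => X; rewrite !ffunE addnC. Qed.

Lemma cnt_pr (Y : {set Sp}) K1 K2 :
  cnt Y (pr K1 K2) = ((if K1 \in Y then 1 else 0) + (if K2 \in Y then 1 else 0))%N.
Proof.
rewrite /cnt; under eq_bigr => X _ do rewrite ffunE.
rewrite big_split /=.
by have := cnt_single Y K1 1; have := cnt_single Y K2 1; rewrite /cnt;
  under eq_bigr => X _ do rewrite ffunE; move=> ->;
  under eq_bigr => X _ do rewrite ffunE; move=> ->.
Qed.

Lemma msize_pr (K1 K2 : Sp) : msize (pr K1 K2) = 2%N.
Proof. by rewrite msize_cnt cnt_pr !finset.in_setT. Qed.

Lemma pr_Lr (K1 K2 : Sp) : pr K1 K2 \in Lr Sig.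
Proof. by rewrite mem_Lr msize_pr. Qed.

Lemma pr_Rs (K1 K2 : Sp) : (pr K1 K2, gr (pr K1 K2)) \in Rs.
Proof. by apply: map_f; apply: pr_Lr. Qed.

Lemma pr_nfix0 (K1 K2 : Sp) s : s \in K1 -> s \notin K2 -> gr (pr K1 K2) != pr K1 K2.
Proof.
move=> H1 H2; apply: (gr_nfix (s := s)).
  by apply/finset.bigcupP; exists K1 => //; rewrite ffunE eqxx.
by rewrite /u cnt_pr !inU H1 H2.
Qed.

Lemma pr_nfix (K1 K2 : Sp) : K1 != K2 -> gr (pr K1 K2) != pr K1 K2.
Proof.
rewrite finset.eqEsubset negb_and => /orP [] /fintype.subsetPn [s H1 H2].
  exact: pr_nfix0 H1 H2.
rewrite prC; exact: pr_nfix0 H1 H2.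
Qed.

Lemma halted_uniform c (K1 K2 : Sp) : halted Rs c -> (0 < c K1)%N -> (0 < c K2)%N -> K1 = K2.
Proof.
move=> Hh H1 H2; apply/eqP; apply: contraT => Hne.
have Hap : applicable (pr K1 K2, gr (pr K1 K2)) c.
  apply/forallP => X /=; rewrite ffunE.
  case E1: (X == K1); case E2: (X == K2) => /=.
  - by move/eqP: E1 => E1; move/eqP: E2 => E2; rewrite -E1 -E2 eqxx in Hne.
  - by move/eqP: E1 => ->.
  - by move/eqP: E2 => ->.
  - by [].
have Hr : reach Rs c (apply_rxn (pr K1 K2, gr (pr K1 K2)) c).
  apply: reach_step (reach_refl _ _); exists (pr K1 K2, gr (pr K1 K2)) => //.
  exact: pr_Rs.
have := apply_eq_void Hap (Hh _ Hr) => /= E.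
by have := pr_nfix Hne; rewrite E eqxx.
Qed.

End Halted.

End M2.
Import M2.

Module M3.
Set Implicit Arguments.
Unset Strict Implicit.
Unset Printing Implicit Defensive.
Import Order.TTheory GRing.Theory Num.Theory.

Section Decide.
Variable Sig : finType.
Variable psi : {ffun Sig -> nat} -> bool.
Local Notation Rs := (Rs Sig).
Local Notation Sp := (Sp Sig).

Definition iotaS (s : Sig) : Sp := [set s].
Definition Fs : Sp := finset.set0.
Definition Y1 : {set Sp} := [set K : Sp | psi [ffun s => nat_of_bool (s \in K)]].
Definition Y0 : {set Sp} := ~: Y1.

Lemma wf_Rs : wf_CRN Rs.
Proof.
split.
- exact: Rs_uniq.
- move=> a /mem_Rs [-> H]; rewrite msize_gr leqnn andbT -mem_Lr //.
- by move=> r Hr; exists (gr r); apply: map_f; rewrite mem_Lr.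
- by move=> r p /mem_Rs [/= E _] /mem_Rs [/= -> _].
- exists 1%N => c c'; elim => [x|x x' x'' [a Ha [Hap ->]] _ IH].
    by rewrite mul1n.
  by rewrite (step_msize Ha Hap) in IH.
Qed.

Lemma iota_inj : injective iotaS.
Proof. by move=> s1 s2 /set1_inj. Qed.

Lemma iota_F s : iotaS s != Fs.
Proof. by apply/finset.set0Pn; exists s; rewrite /iotaS finset.in_set1. Qed.

Lemma disj_Y : [disjoint Y0 & Y1].
Proof. by rewrite finset.disjoints_subset /Y0 fintype.subxx. Qed.

Lemma voters : halts_with_only_voters Rs iotaS Fs Y0 Y1.
Proof.
move=> c0 cs als _ _ _ X _.
by rewrite finset.in_setU /Y0 finset.in_setC orNb.
Qed.

Lemma exists_pos (c : vec Sp) : (0 < msize c)%N -> exists K, (0 < c K)%N.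
Proof.
move=> H; apply/existsP; apply: contraLR H; rewrite negb_exists => /forallP H.
rewrite -leqNgt leqn0 /msize; apply/eqP; apply: big1 => X _.
by have := H X; rewrite lt0n negbK => /eqP.
Qed.

Lemma uniform_form (c : vec Sp) K : (forall K', (0 < c K')%N -> K' = K) ->
  c = [ffun X => if X == K then c K else 0%N].
Proof.
move=> H; apply/ffunP => X; rewrite ffunE; case: eqP => [->//|HX].
by case: (posnP (c X)) => // /H.
Qed.

Lemma c0_known c0 s : valid_init iotaS Fs c0 ->
  (u s c0 < msize c0)%N = (0 < c0 [set s])%N.
Proof.
case=> Hv _.
have E : cnt (~: [set K : Sp | s \notin K]) c0 = c0 [set s].
  rewrite /cnt (bigD1 [set s]) /=; last by rewrite finset.in_setC inU negbK finset.in_set1.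
  rewrite big1 ?addn0 // => X /andP [HX Hne]; apply: Hv.
    move=> s'; apply/eqP => E; move: HX; rewrite finset.in_setC inU negbK E finset.in_set1.
    by move/eqP => Es; rewrite E Es eqxx in Hne.
  apply/eqP => E; move: HX; by rewrite finset.in_setC inU negbK E finset.in_set0.
rewrite (cnt_split [set K : Sp | s \notin K] c0) -/(u s c0) E.
by rewrite -[X in (X < _)%N]addn0 ltn_add2l.
Qed.

Hypothesis Hdet : detection psi.

Lemma decides : haltingly_decides Rs iotaS Fs Y0 Y1 psi.
Proof.
move=> c0 cs als Hv Hex Hf.
case: (halt_exists Hex Hf) => T [Hh _]; exists T; split => //.
set c := cs T.
have Hm : msize c = msize c0 by rewrite /c (exec_msize Hex).
have Hpos : (0 < msize c)%N.
  rewrite Hm; case: Hv => _ HF; exact: leq_trans HF (le_msize c0 Fs).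
case: (exists_pos Hpos) => K HK.
have Hu : forall K', (0 < c K')%N -> K' = K by move=> K' H'; exact: halted_uniform Hh H' HK.
have Hc := uniform_form Hu.
have Hcnt : forall Y : {set Sp}, cnt Y c = if K \in Y then c K else 0%N.
  by move=> Y; rewrite Hc cnt_single ffunE eqxx.
have HKs : forall s, (s \in K) = (0 < c0 [set s])%N.
  move=> s; rewrite -(c0_known s Hv) -(exec_known Hex s T) -/c.
  rewrite msize_cnt /u !Hcnt finset.in_setT inU.
  by case: (s \in K) => /=; [rewrite HK | rewrite ltnn].
have Hpsi : psi (input_of iotaS c0) = (K \in Y1).
  rewrite Hdet /Y1 finset.in_set; congr psi; apply/ffunP => s; rewrite !ffunE HKs.
  by [].
rewrite /in_D !Hcnt Hpsi /Y0 finset.in_setC.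
by case: (K \in Y1) => /=; rewrite HK eqxx.
Qed.

End Decide.

End M3.
Import M3.

Module M4.
Set Implicit Arguments.
Unset Strict Implicit.
Unset Printing Implicit Defensive.
Import Order.TTheory GRing.Theory Num.Theory.
Local Open Scope ring_scope.

Lemma sum_tuple_prod (T : finType) (g : T -> real) s :
  \sum_(w : s.-tuple T) \prod_(x <- w) g x = (\sum_x g x) ^+ s.
Proof.
elim: s => [|s IH].
  rewrite expr0 (big_pred1 [tuple]) ?big_nil // => w /=.
  by apply/esym/eqP; apply: tuple0.
pose h (p : T * s.-tuple T) : s.+1.-tuple T := [tuple of p.1 :: p.2].
pose h' (w : s.+1.-tuple T) : T * s.-tuple T := (thead w, [tuple of behead w]).
rewrite (reindex h) /=; last first.
  exists h' => [[x t] _|w _].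
    by rewrite /h /h' theadE; congr pair; apply: val_inj.
  by rewrite /h /h' /= -tuple_eta.
rewrite -(pair_bigA _ (fun x (t : s.-tuple T) => \prod_(y <- h (x, t)) g y)) /=.
rewrite exprS big_distrl /=; apply: eq_bigr => x _.
rewrite -IH big_distrr /=; apply: eq_bigr => t _.
by rewrite big_cons.
Qed.

Lemma geom_le (q : real) N : 0 <= q -> q < 1 -> \sum_(s < N) q ^+ s <= (1 - q)^-1.
Proof.
move=> q0 q1.
have E : (\sum_(s < N) q ^+ s) * (1 - q) = 1 - q ^+ N.
  elim: N => [|N IH]; first by rewrite big_ord0 mul0r expr0 subrr.
  rewrite big_ord_recr /= mulrDl IH exprS; ring.
have Hq : 0 < 1 - q by rewrite subr_gt0.
rewrite -(ler_pM2r Hq) E mulVf ?gt_eqF // lerBlDr lerDl.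
exact: exprn_ge0.
Qed.

Section TCbound.
Variable Sig : finType.
Local Notation Rs := (Rs Sig).
Local Notation Sp := (Sp Sig).
Variable v : real.
Hypothesis v0 : 0 < v.

Definition rho (c : vec Sp) : {set 'I_(size Rs)} := [set j | ~~ is_void (rx j)].
Definition Tot (c : vec Sp) := tot_propensity Rs v c.
Definition Pnv (c : vec Sp) := \sum_(j < size Rs | ~~ is_void (rx j)) propensity v c j.
Definition Pv (c : vec Sp) := \sum_(j < size Rs | is_void (rx j)) propensity v c j.

Lemma prop_ge0 (c : vec Sp) (j : 'I_(size Rs)) : 0 <= propensity v c j.
Proof.
rewrite /propensity; apply: divr_ge0.
  apply: divr_ge0; last exact: ler0n.
  by apply: prodr_ge0 => X _; apply: ler0n.
by case: ifP => _; [apply: ltW|apply: ler01].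
Qed.

Lemma Tot_ge0 (c : vec Sp) : 0 <= Tot c.
Proof. by apply: sumr_ge0 => j _; apply: prop_ge0. Qed.

Lemma Tot_split (c : vec Sp) : Tot c = Pv c + Pnv c.
Proof. by rewrite /Tot /tot_propensity (bigID (fun j => is_void (rx j))). Qed.

Lemma prop_app (c : vec Sp) (j : 'I_(size Rs)) : propensity v c j != 0 -> applicable (rx j) c.
Proof.
apply: contraR => /forallPn [X HX].
rewrite /propensity (bigD1 X) //= bin_small ?mul0r //.
by rewrite ltnNge.
Qed.

Lemma path_bound (c : vec Sp) (w : seq 'I_(size Rs)) : all (fun j => is_void (rx j)) w ->
  path_prob v c w / Tot (foldl (fun c' a => apply_rxn (rx a) c') c w)
  <= (\prod_(x <- w) (propensity v c x / Tot c)) / Tot c.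
Proof.
elim: w => [|a w IH] /=; first by rewrite big_nil.
case/andP => Hva Hw; rewrite big_cons.
case: (eqVneq (propensity v c a) 0) => Hp.
  by rewrite Hp !mul0r.
have Hap := prop_app Hp.
have -> : apply_rxn (rx a) c = c.
  by apply: apply_void => //; move: Hva; rewrite /is_void => /eqP ->.
rewrite -mulrA -[X in _ <= X]mulrA; apply: ler_wpM2l.
  by apply: divr_ge0; [apply: prop_ge0|apply: Tot_ge0].
exact: IH.
Qed.

Definition gv (c : vec Sp) (x : 'I_(size Rs)) := if is_void (rx x) then propensity v c x / Tot c else 0.

Lemma gv_ge0 (c : vec Sp) x : 0 <= gv c x.
Proof. by rewrite /gv; case: ifP => // _; apply: divr_ge0; [apply: prop_ge0|apply: Tot_ge0]. Qed.

Lemma sum_gv (c : vec Sp) : \sum_x gv c x = Pv c / Tot c.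
Proof. by rewrite /gv -big_mkcond /= /Pv mulr_suml. Qed.

Definition cond_TC (c : vec Sp) s (w : s.-tuple 'I_(size Rs)) : Prop :=
  forall s', (s' <= s)%N -> ~ tau_cond (cfg_at c w) (onth w) 0%N (rho c) s'.

Lemma cond_void (c : vec Sp) s (w : s.-tuple 'I_(size Rs)) : cond_TC c w -> all (fun j => is_void (rx j)) w.
Proof.
move=> Hc; apply/allP => x /onthP [i Hi].
have Hsz : (i < s)%N by rewrite -(size_tuple w) -onthTE Hi.
apply: contraT => Hnv; exfalso; apply: (Hc i.+1 Hsz); split => //.
by left; exists x => //; rewrite /rho finset.in_set.
Qed.

Lemma term_bound (c : vec Sp) s (w : s.-tuple 'I_(size Rs)) :
  (if `[< cond_TC c w >] then path_prob v c w / Tot (cfg_at c w s) else 0)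
  <= (\prod_(x <- w) gv c x) / Tot c.
Proof.
case: asboolP => [Hc|_]; last first.
  by apply: mulr_ge0; [apply: prodr_ge0 => x _; apply: gv_ge0|rewrite invr_ge0 Tot_ge0].
have Hv := cond_void Hc.
have -> : cfg_at c w s = foldl (fun c' a => apply_rxn (rx a) c') c w.
  by rewrite /cfg_at take_oversize // size_tuple.
have -> : \prod_(x <- w) gv c x = \prod_(x <- w) (propensity v c x / Tot c).
  by apply: eq_big_seq => x Hx; rewrite /gv (allP Hv x Hx).
exact: path_bound Hv.
Qed.

Lemma TC_nonhalt (c : vec Sp) : 0 < Pnv c -> (TC v rho c <= (Pnv c)^-1%:E)%E.
Proof.
move=> Hp; apply: ge_ereal_sup => _ [N _ <-]; rewrite lee_fin.
have HT : 0 < Tot c by rewrite Tot_split; apply: ltr_pwDr => //; apply: sumr_ge0 => j _; apply: prop_ge0.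
apply: (@le_trans _ _ (\sum_(s < N) (Pv c / Tot c) ^+ s / Tot c)).
  apply: ler_sum => s _; rewrite -sum_gv -sum_tuple_prod mulr_suml.
  apply: ler_sum => w _.
  exact: (term_bound c w).
apply: (@le_trans _ _ ((1 - Pv c / Tot c)^-1 / Tot c)).
  rewrite -mulr_suml; apply: ler_wpM2r; first by rewrite invr_ge0 ltW.
  apply: geom_le; first by apply: divr_ge0; [apply: sumr_ge0 => j _; apply: prop_ge0|apply: ltW].
  rewrite ltr_pdivrMr // mul1r Tot_split ltrDl //.
by rewrite -invfM mulrBl mul1r mulfVK ?gt_eqF // Tot_split addrAC subrr add0r.
Qed.

Lemma TC_halt (c : vec Sp) : (forall j : 'I_(size Rs), ~~ is_void (rx j) -> ~~ applicable (rx j) c) ->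
  (TC v rho c <= (Tot c)^-1%:E)%E.
Proof.
move=> Hh; apply: ge_ereal_sup => _ [N _ <-]; rewrite lee_fin.
case: N => [|N]; first by rewrite big_ord0 invr_ge0 Tot_ge0.
rewrite big_ord_recl /= [X in _ + X]big1 ?addr0; last first.
  move=> i _; apply: big1 => w _.
  case: asboolP => // Hc; exfalso; apply: (Hc 1%N) => //; split => //.
  right => a; rewrite /rho finset.in_set => Ha; exists 0%N => //.
  by rewrite /cfg_at take0 /=; apply: Hh.
apply: (@le_trans _ _ (\sum_(w : 0.-tuple 'I_(size Rs)) (\prod_(x <- w) gv c x) / Tot c)).
  by apply: ler_sum => w _; exact: (term_bound c w).
by rewrite -mulr_suml sum_tuple_prod expr0 mul1r.
Qed.

End TCbound.

End M4.
Import M4.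

Module M5.
Set Implicit Arguments.
Unset Strict Implicit.
Unset Printing Implicit Defensive.
Import Order.TTheory GRing.Theory Num.Theory.
Local Open Scope ring_scope.

Lemma sum_sub_uniq (T : eqType) (l1 l2 : seq T) (G : T -> real) :
  uniq l1 -> uniq l2 -> {subset l1 <= l2} -> (forall x, 0 <= G x) ->
  \sum_(x <- l1) G x <= \sum_(x <- l2) G x.
Proof.
move=> u1 u2 sub G0.
have P : perm_eq l2 (l1 ++ [seq x <- l2 | x \notin l1]).
  apply: uniq_perm => //.
    rewrite cat_uniq u1 filter_uniq // andbT.
    by apply/hasPn => x; rewrite mem_filter => /andP [].
  move=> x; rewrite mem_cat mem_filter.
  by case: (boolP (x \in l1)) => H //=; rewrite (sub x H).
rewrite (perm_big _ P) big_cat /= lerDl.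
by apply: sumr_ge0 => x _.
Qed.

Section Lower.
Variable Sig : finType.
Local Notation Rs := (Rs Sig).
Local Notation Sp := (Sp Sig).
Variable v : real.
Hypothesis v0 : 0 < v.

Definition propA (c : vec Sp) (a : rxn Sp) : real :=
  ((\prod_(X : Sp) ('C(c X, a.1 X))%:R) / (count (fun b : rxn Sp => b.1 == a.1) Rs)%:R
    / (if msize a.1 == 2%N then v else 1)).

Lemma propA_ge0 c a : 0 <= propA c a.
Proof.
rewrite /propA; apply: divr_ge0.
  apply: divr_ge0; last exact: ler0n.
  by apply: prodr_ge0 => X _; apply: ler0n.
by case: ifP => _; [apply: ltW|apply: ler01].
Qed.

Lemma Pnv_seq (c : vec Sp) : Pnv v c =
  \sum_(r <- Lr Sig) (if ~~ is_void (r, gr r) then propA c (r, gr r) else 0).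
Proof.
rewrite -big_mkcond /= -(big_map (fun r => (r, gr r)) (fun a => ~~ is_void a) (propA c)).
by rewrite (big_tnth _ _ Rs).
Qed.

Lemma prod_pr (c : vec Sp) (K1 K2 : Sp) : K1 != K2 ->
  \prod_(X : Sp) ('C(c X, pr K1 K2 X))%:R = (c K1)%:R * (c K2)%:R :> real.
Proof.
move=> Hne; rewrite (bigD1 K1) //= (bigD1 K2) //=; last by rewrite eq_sym.
rewrite big1 ?mulr1.
  rewrite !ffunE eqxx (negbTE Hne) eq_sym (negbTE Hne) eqxx /=.
  by rewrite !bin1.
move=> X /andP [H1 H2]; rewrite ffunE (negbTE H1) (negbTE H2) bin0 //.
Qed.

Lemma propA_pr (c : vec Sp) (K1 K2 : Sp) : K1 != K2 ->
  propA c (pr K1 K2, gr (pr K1 K2)) = (c K1)%:R * (c K2)%:R / v.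
Proof.
move=> Hne; rewrite /propA /= prod_pr // count_Rs ?pr_Lr // msize_pr /=.
by rewrite divr1.
Qed.

Lemma pr_inj_D s : {in [pred p : Sp * Sp | (s \notin p.1) && (s \in p.2)] &,
   injective (fun p : Sp * Sp => pr p.1 p.2)}.
Proof.
move=> [K1 K2] [K1' K2']; rewrite !inE /= => /andP [a1 a2] /andP [b1 b2] E.
have E1 := congr1 (fun h : vec Sp => h K1) E.
have E2 := congr1 (fun h : vec Sp => h K2) E.
move: E1 E2; rewrite /= !ffunE !eqxx.
have n1 : K1 != K2 by apply/eqP => H; rewrite H a2 in a1.
have n1' : K1 != K2' by apply/eqP => H; rewrite H b2 in a1.
have n2 : K2 != K1' by apply/eqP => H; rewrite -H a2 in b1.
move=> E1 E2; congr pair.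
- move: E1; case: (K1 =P K1') => [-> //|_]; case: (K1 =P K2') => [H|_].
    by move: n1'; rewrite H eqxx.
  by case: (K1 =P K2).
- move: E2; case: (K2 =P K2') => [-> //|_]; case: (K2 =P K1') => [H|_].
    by move: n2; rewrite H eqxx.
  by case: (K2 =P K1).
Qed.

Lemma Pnv_lower (c : vec Sp) s :
  (u s c)%:R * (msize c - u s c)%:R / v <= Pnv v c.
Proof.
set D := [pred p : Sp * Sp | (s \notin p.1) && (s \in p.2)].
set l1 := [seq pr p.1 p.2 | p <- enum D].
have u1 : uniq l1.
  rewrite map_inj_in_uniq ?enum_uniq // => p q; rewrite !mem_enum; exact: pr_inj_D.
have Hsub : {subset l1 <= Lr Sig} by move=> r /mapP [p _ ->]; apply: pr_Lr.
have Hs := sum_sub_uniq (G := fun r => if ~~ is_void (r, gr r) then propA c (r, gr r) else 0)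
   u1 (Lr_uniq Sig) Hsub.
rewrite Pnv_seq; apply: le_trans (Hs _); last first.
  by move=> r; case: ifP => _ //; apply: propA_ge0.
rewrite big_map big_enum /=.
have E : forall p : Sp * Sp, p \in D ->
   (if ~~ is_void (pr p.1 p.2, gr (pr p.1 p.2)) then propA c (pr p.1 p.2, gr (pr p.1 p.2)) else 0)
   = (c p.1)%:R * (c p.2)%:R / v.
  move=> [K1 K2]; rewrite inE /= => /andP [H1 H2].
  have Hne : K1 != K2 by apply/eqP => H; rewrite H H2 in H1.
  rewrite /is_void /= eq_sym (negbTE (pr_nfix Hne)) /=; exact: propA_pr.
rewrite (eq_bigr _ E).
rewrite -(pair_big (fun K1 : Sp => s \notin K1) (fun K2 : Sp => s \in K2)
           (fun K1 K2 => (c K1)%:R * (c K2)%:R / v)) /=.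
rewrite le_eqVlt; apply/orP; left; apply/eqP.
have Hu : u s c = (\sum_(K1 : Sp | s \notin K1) c K1)%N.
  by rewrite /u /cnt; apply: eq_bigl => K; rewrite inU.
have Hk : (msize c - u s c)%N = (\sum_(K2 : Sp | s \in K2) c K2)%N.
  rewrite (cnt_split [set K : Sp | s \notin K] c) -/(u s c) addKn /cnt.
  by apply: eq_bigl => K; rewrite finset.in_setC inU negbK.
rewrite Hk Hu !natr_sum -mulrA mulr_suml; apply: eq_bigr => K1 _.
rewrite mulr_suml mulr_sumr; apply: eq_bigr => K2 _.
by rewrite mulrA.
Qed.

Lemma Tot_ge1 (c : vec Sp) : (0 < msize c)%N -> 1 <= Tot v c.
Proof.
move=> Hm; case: (exists_pos Hm) => K HK.
set e := [ffun X : Sp => if X == K then 1%N else 0%N].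
have He : msize e = 1%N by rewrite msize_cnt cnt_single finset.in_setT.
have HeL : e \in Lr Sig by rewrite mem_Lr He.
have HeR : (e, gr e) \in Rs by apply: map_f.
case: (index_of HeR) => j Ej.
rewrite /Tot /tot_propensity (bigD1 j) //=.
rewrite -[X in X <= _]addr0; apply: lerD; last by apply: sumr_ge0 => i _; apply: prop_ge0.
rewrite /propensity Ej /= count_Rs // He /= !divr1.
rewrite (bigD1 K) //= big1 ?mulr1.
  by rewrite ffunE eqxx bin1 ler1n.
by move=> X HX; rewrite ffunE (negbTE HX) bin0.
Qed.

End Lower.

End M5.
Import M5.

Module M6.
Set Implicit Arguments.
Unset Strict Implicit.
Unset Printing Implicit Defensive.
Import Order.TTheory GRing.Theory Num.Theory.
Local Open Scope ring_scope.

Lemma ln_diff (a b : real) : 0 < a -> a <= b -> (b - a) / b <= ln b - ln a.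
Proof.
move=> a0 ab.
have b0 : 0 < b by apply: lt_le_trans ab.
have Hx : -1 < a / b - 1 by rewrite ltrBrDr addrC subrr divr_gt0.
have := le_ln1Dx Hx; rewrite addrC subrK.
rewrite lnM ?posrE ?invr_gt0 // lnV ?posrE //.
have -> : a / b - 1 = - ((b - a) / b) by rewrite mulrBl mulfV ?gt_eqF // opprB.
move=> H; rewrite -lerN2 opprB; apply: le_trans H _; by rewrite addrC.
Qed.

Definition Hn (n : nat) : real := \sum_(j < n) (j.+1%:R)^-1.

Lemma Hn_le n : (1 <= n)%N -> Hn n <= 1 + ln (n%:R).
Proof.
elim: n => [//|n IH] _.
case: n IH => [|n] IH.
  by rewrite /Hn big_ord_recr big_ord0 /= add0r ln1 addr0 invr1.
have IH' := IH isT.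
rewrite /Hn big_ord_recr /= -/(Hn n.+1).
have Hd : (n.+2%:R - n.+1%:R) / n.+2%:R <= ln (n.+2%:R) - ln (n.+1%:R) :> real.
  by apply: ln_diff; [apply: ltr0Sn | rewrite ler_nat].
move: Hd; rewrite [n.+2%:R]mulrSr addrAC subrr add0r mul1r -[n.+1%:R +1]mulrSr.
move: IH'; set a := Hn n.+1; set b := ln _; set c := ln _; set d := _^-1.
lra.
Qed.

Lemma ln_ge1 n : (4 <= n)%N -> 1 <= ln (n%:R : real).
Proof.
move=> Hn4.
have H2 : 1 / 2 <= ln (2 : real).
  have h12 : (1 : real) <= 2 by lra.
  have := @ln_diff 1 2 ltr01 h12; rewrite ln1 subr0.
  by have -> : (2 : real) - 1 = 1 by lra.
have H4 : ln (4 : real) = ln 2 + ln 2.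
  by rewrite -lnM ?posrE //; congr ln; lra.
have Hle : ln (4 : real) <= ln (n%:R).
  rewrite ler_ln ?posrE //; first by rewrite (ler_nat _ 4 n).
  by rewrite ltr0n; apply: leq_trans Hn4.
move: Hle; rewrite H4; lra.
Qed.

End M6.
Import M6.

Module M7.
Set Implicit Arguments.
Unset Strict Implicit.
Unset Printing Implicit Defensive.
Import Order.TTheory GRing.Theory Num.Theory.
Local Open Scope ring_scope.

Lemma sum_rev_le0 n : \sum_(j < n) ((n - j.+1)%:R)^-1 <= Hn n.
Proof.
rewrite (reindex_inj rev_ord_inj) /=.
case: n => [|m]; first by rewrite /Hn !big_ord0.
rewrite big_ord_recl /=.
have E0 : (m.+1 - (m.+1 - 1).+1)%N = 0%N by lia.
have E1 : forall i : 'I_m, (m.+1 - (m.+1 - (bump 0 i).+1).+1)%N = i.+1.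
  by move=> i; rewrite /bump /=; have := ltn_ord i; lia.
rewrite E0 invr0 add0r.
under eq_bigr => i _ do rewrite E1.
by rewrite /Hn big_ord_recr /= lerDl invr_ge0 ler0n.
Qed.

Section Gdefs.
Variables (n : nat) (v : real).
Hypothesis v0 : 0 < v.

Definition wgt (j : nat) : real := v / n%:R * ((j%:R)^-1 + ((n - j)%:R)^-1).
Definition Gf (m : nat) : real := \sum_(j < m) wgt j.+1.

Lemma wgt_ge0 j : 0 <= wgt j.
Proof.
rewrite /wgt; apply: mulr_ge0; first by apply: divr_ge0; [apply: ltW|apply: ler0n].
by apply: addr_ge0; rewrite invr_ge0 ler0n.
Qed.

Lemma Gf_ge0 m : 0 <= Gf m.
Proof. by apply: sumr_ge0 => j _; apply: wgt_ge0. Qed.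

Lemma Gf_mono m m' : (m <= m')%N -> Gf m <= Gf m'.
Proof.
move/subnKC <-; elim: (m' - m)%N => [|k IH]; first by rewrite addn0.
rewrite addnS /Gf big_ord_recr /=; apply: le_trans IH _.
by rewrite lerDl wgt_ge0.
Qed.

Lemma Gf_step m m' : (m' < m)%N -> Gf m' + wgt m <= Gf m.
Proof.
case: m => [//|p] Hp.
rewrite /Gf big_ord_recr /= lerD2r; exact: Gf_mono.
Qed.

Lemma inv_le_wgt (P : real) u : (1 <= u)%N -> (u < n)%N ->
  u%:R * (n - u)%:R / v <= P -> P^-1 <= wgt u.
Proof.
move=> u1 un HP.
have x0 : 0 < u%:R :> real by rewrite ltr0n.
have y0 : 0 < (n - u)%:R :> real by rewrite ltr0n subn_gt0.
have q0 : 0 < u%:R * (n - u)%:R / v :> real by rewrite divr_gt0 ?mulr_gt0.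
have P0 : 0 < P := lt_le_trans q0 HP.
apply: (@le_trans _ _ (u%:R * (n - u)%:R / v)^-1).
  by rewrite lef_pV2 ?posrE.
have En : n%:R = u%:R + (n - u)%:R :> real by rewrite -natrD subnKC // ltnW.
rewrite /wgt En le_eqVlt; apply/orP; left; apply/eqP.
field; by rewrite (gt_eqF x0) (gt_eqF y0) (gt_eqF v0) gt_eqF ?addr_gt0.
Qed.

Lemma sum_rev_le : \sum_(j < n) ((n - j.+1)%:R)^-1 <= Hn n.
Proof. exact: sum_rev_le0. Qed.

Lemma Gf_n_le : Gf n <= 2 * (v / n%:R) * Hn n.
Proof.
rewrite /Gf /wgt -mulr_sumr big_split /=.
have H1 : \sum_(j < n) (j.+1%:R)^-1 = Hn n :> real by [].
rewrite H1.
have k0 : 0 <= v / n%:R by apply: divr_ge0; [apply: ltW|apply: ler0n].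
have := ler_wpM2l k0 sum_rev_le; lra.
Qed.

End Gdefs.

End M7.
Import M7.

Module M8.
Set Implicit Arguments.
Unset Strict Implicit.
Unset Printing Implicit Defensive.
Import Order.TTheory GRing.Theory Num.Theory.
Local Open Scope ring_scope.

Definition Psi (Sig : finType) (n : nat) (v : real) (c : vec (Sp Sig)) : real :=
  \sum_(s : Sig) Gf n v (u s c).

Section Reach.
Variable Sig : finType.
Local Notation Rs := (Rs Sig).
Local Notation Sp := (Sp Sig).

Lemma reach_change (c c' : vec Sp) : reach Rs c c' -> c' != c ->
  exists2 a, a \in Rs & applicable a c /\ apply_rxn a c != c.
Proof.
elim => [x|x x1 x2 [a Ha [Hap E]] _ IH] Hne; first by rewrite eqxx in Hne.
case: (eqVneq (apply_rxn a x) x) => Ea; last by exists a.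
have Ex : x1 = x by rewrite E Ea.
by rewrite Ex in IH; apply: IH.
Qed.

Lemma not_halted_NV (c : vec Sp) : ~ halted Rs c ->
  exists j : 'I_(size Rs), ~~ is_void (rx j) /\ applicable (rx j) c.
Proof.
move=> Hnh.
case: (pselect (exists c', reach Rs c c' /\ c' != c)) => [[c' [Hr Hne]]|H]; last first.
  exfalso; apply: Hnh => c' Hr; apply/eqP; apply: contraT => Hne.
  by exfalso; apply: H; exists c'.
case: (reach_change Hr Hne) => a Ha [Hap Hc].
case: (index_of Ha) => j Ej; exists j; rewrite Ej; split => //.
apply: contra Hc => /eqP E; apply/eqP; exact: apply_void.
Qed.
End Reach.

Section Rounds.
Variable Sig : finType.
Local Notation Rs := (Rs Sig).
Local Notation Sp := (Sp Sig).
Variable v : real.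
Hypothesis v0 : 0 < v.
Variables (c0 : vec Sp) (cs : nat -> vec Sp) (als : nat -> 'I_(size Rs)) (sigma : nat -> nat).
Hypothesis Hex : is_exec c0 cs als.
Hypothesis Hf : weakly_fair cs als.
Hypothesis Hsig : skipping_policy sigma.
Hypothesis Hn1 : (0 < msize c0)%N.
Local Notation n := (msize c0).
Local Notation rh := (@rho Sig).

Lemma exec_reach t k : reach Rs (cs t) (cs (t + k)).
Proof.
elim: k t => [|k IH] t; first by rewrite addn0; apply: reach_refl.
case: (exec_step Hex t) => Hap E.
apply: reach_step (_ : reach Rs (cs t.+1) _); last by rewrite addnS -addSn; apply: IH.
by exists (rx (als t)); [apply: rx_in|split].
Qed.

Definition tstar := halting_step Rs cs.

Lemma ts_spec : halted Rs (cs tstar) /\ forall t, halted Rs (cs t) -> (tstar <= t)%N.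
Proof.
apply: least_spec; case: (halt_exists Hex Hf) => T [H _]; by exists T.
Qed.

Lemma ts_const t : (tstar <= t)%N -> cs t = cs tstar.
Proof.
move/subnKC <-; case: ts_spec => Hh _; exact: Hh _ (exec_reach _ _).
Qed.

Lemma tau_spec te : tau_cond cs (fun u => Some (als u)) te (rh (cs te)) (tau cs als te (rh (cs te))).
Proof.
apply: (proj1 (least_spec _)).
exists (maxn te tstar).+1; split; first by rewrite ltnS leq_maxl.
right => a; rewrite /rho finset.in_set => Ha; exists (maxn te tstar).
  by rewrite leq_maxl leqnSn.
rewrite ts_const ?leq_maxr //; case: ts_spec => Hh _; exact: halted_NV.
Qed.

Definition rt i := round_t rh sigma cs als i.
Definition te i := sigma (rt i).

Lemma te_lt i : (te i < rt i.+1)%N.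
Proof. by case: (tau_spec (te i)). Qed.

Lemma rt_te i : (rt i <= te i)%N.
Proof. exact: Hsig. Qed.

Lemma te_mono i : (te i <= te i.+1)%N.
Proof. exact: leq_trans (ltnW (te_lt i)) (rt_te _). Qed.

Lemma te_mono' i k : (te i <= te (i + k))%N.
Proof.
elim: k => [|k IH]; first by rewrite addn0.
by rewrite addnS; apply: leq_trans IH (te_mono _).
Qed.

Lemma rt_ge i : (i <= rt i)%N.
Proof.
elim: i => [//|i IH]; exact: leq_ltn_trans (leq_trans IH (rt_te i)) (te_lt i).
Qed.

Definition istar := least (fun i => (tstar <= rt i)%N).

Lemma is_spec : (tstar <= rt istar)%N /\ forall i, (tstar <= rt i)%N -> (istar <= i)%N.
Proof. by apply: least_spec; exists tstar; apply: rt_ge. Qed.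

Lemma change_in_round i : (te i < tstar)%N ->
  exists t0, [/\ (te i <= t0 < rt i.+1)%N, cs t0 = cs (te i) & cs t0.+1 != cs t0].
Proof.
move=> Hlt.
have Hnh : ~ halted Rs (cs (te i)).
  by move=> H; case: ts_spec => _ /(_ _ H); rewrite leqNgt Hlt.
case: (tau_spec (te i)) => Hs [[a Ea Ha]|Hall].
- set t1 := (rt i.+1).-1.
  have Ht1 : (rt i.+1 = t1.+1)%N by rewrite /t1 prednK // (leq_ltn_trans _ Hs).
  have Hte1 : (te i <= t1)%N by rewrite -ltnS -Ht1.
  case: Ea => Ea; subst a; case: (exec_step Hex t1) => Hap E.
  have Hch : cs t1.+1 != cs t1.
    rewrite E; apply/eqP => E2; have E3 := apply_eq_void Hap E2.
    by move: Ha; rewrite /rho finset.in_set /is_void E3 eqxx.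
  have Hch2 : cs (te i + (t1.+1 - te i)) != cs (te i).
    rewrite subnKC ?(leqW Hte1) //; apply/eqP => E2.
    have := pot_lt (rx_in _) Hap; rewrite -E in Hch *.
    move=> /(_ Hch); rewrite E2.
    have := exec_pot_mono Hex Hte1; lia.
  case: (change_step Hch2) => t0 [/andP [H1 H2] H3 H4]; exists t0; split => //.
  by rewrite H1 /= Ht1 -(subnKC (leqW Hte1)).
- case: (not_halted_NV Hnh) => j [Hnv Hap].
  case: (Hall j); first by rewrite /rho finset.in_set.
  move=> w /andP [Hw1 Hw2] Hna.
  have Hch2 : cs (te i + (w - te i)) != cs (te i).
    rewrite subnKC //; apply/eqP => E2; by rewrite E2 Hap in Hna.
  case: (change_step Hch2) => t0 [/andP [H1 H2] H3 H4]; exists t0; split => //.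
  rewrite H1 /=; apply: leq_trans H2 _; by rewrite subnKC.
Qed.

Lemma Psi_mono t t' : (t <= t')%N -> Psi n v (cs t') <= Psi n v (cs t).
Proof.
move=> H; apply: ler_sum => s _; apply: (Gf_mono n v0); exact: (exec_u_mono' Hex s H).
Qed.

Lemma Psi_ge0 (c : vec Sp) : 0 <= Psi n v c.
Proof. by apply: sumr_ge0 => s _; apply: (Gf_ge0 n v0). Qed.

Lemma round_bound i : (i < istar)%N ->
  (TC v rh (cs (te i)) <=
    (Psi n v (cs (te i)) - Psi n v (cs (te i.+1)) + (if (tstar <= te i)%N then 1 else 0))%:E)%E.
Proof.
move=> Hi.
have Hd : 0 <= Psi n v (cs (te i)) - Psi n v (cs (te i.+1)).
  by rewrite subr_ge0; apply: Psi_mono; apply: te_mono.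
case: ifP => Hts.
  apply: le_trans (TC_halt v0 _) _.
    rewrite (ts_const Hts); case: ts_spec => Hh _ j; exact: halted_NV.
  rewrite lee_fin.
  have HT : 1 <= Tot v (cs (te i)) by apply: (Tot_ge1 v0); rewrite (exec_msize Hex).
  have : (Tot v (cs (te i)))^-1 <= 1 by rewrite invf_le1 // (lt_le_trans ltr01 HT).
  move: Hd; lra.
have Hlt : (te i < tstar)%N by rewrite ltnNge Hts.
case: (change_in_round Hlt) => t0 [/andP [H1 H2] H3 H4].
case: (exec_step Hex t0) => Hap E.
rewrite E in H4; case: (step_change (rx_in _) Hap H4) => s [_ Hs1 Hs2].
rewrite -E in Hs1.
have Hm : msize (cs t0) = n by rewrite (exec_msize Hex).
rewrite Hm in Hs2.
set uu := u s (cs t0) in Hs1 Hs2.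
have Hu1 : (1 <= uu)%N by apply: leq_trans Hs1.
have HP := Pnv_lower v0 (cs t0) s; rewrite Hm -/uu in HP.
have HPpos : 0 < Pnv v (cs t0).
  by apply: (lt_le_trans _ HP); rewrite divr_gt0 // mulr_gt0 // ltr0n ?subn_gt0.
have HTC := TC_nonhalt v0 HPpos.
have Hw := inv_le_wgt v0 Hu1 Hs2 HP.
have Hdrop : Psi n v (cs t0.+1) + wgt n v uu <= Psi n v (cs t0).
  rewrite /Psi (bigD1 s) //= [X in _ <= X](bigD1 s) //= -/uu addrAC.
  apply: lerD; first by apply: (Gf_step n v0).
  apply: ler_sum => s' _; apply: (Gf_mono n v0); exact: (exec_u_mono' Hex _ (leqnSn t0)).
have Hmono : Psi n v (cs (te i.+1)) <= Psi n v (cs t0.+1).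
  apply: Psi_mono; apply: leq_trans H2 (rt_te _).
rewrite H3 in HTC Hdrop Hw.
apply: le_trans HTC _; rewrite lee_fin addr0.
move: Hw Hdrop Hmono; lra.
Qed.

Lemma RT_bound : (RT_exec v rh sigma cs als <= (Psi n v c0 + 1)%:E)%E.
Proof.
rewrite /RT_exec -/tstar.
have -> : least (fun i => (tstar <= round_t rh sigma cs als i)%N) = istar by [].
apply: le_trans (lee_sum (P := fun _ => true) _ _) _.
  by move=> i _; apply: round_bound.
rewrite sumEFin lee_fin big_split /=.
have Htel : forall m, \sum_(i < m) (Psi n v (cs (te i)) - Psi n v (cs (te i.+1)))
     = Psi n v (cs (te 0)) - Psi n v (cs (te m)).
  elim=> [|m IH]; first by rewrite big_ord0 subrr.
  by rewrite big_ord_recr /= IH addrA subrK.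
rewrite Htel.
have Hind : \sum_(i < istar) (if (tstar <= te i)%N then 1 else 0) <= 1 :> real.
  case: is_spec => _ Hmin.
  case E: istar => [|k]; first by rewrite big_ord0 ler01.
  rewrite big_ord_recr /= big1 ?add0r; first by case: ifP.
  move=> i _; case: ifP => // H.
  have := Hmin i.+1 (leq_trans H (ltnW (te_lt i))); rewrite E ltnS leqNgt ltn_ord //.
have H0 : Psi n v (cs (te 0)) <= Psi n v c0.
  have H0' := @Psi_mono 0 (te 0) (leq0n _); case: Hex => E0 _; by rewrite E0 in H0'.
have := Psi_ge0 (cs (te istar)); move: Hind H0; lra.
Qed.

End Rounds.

End M8.
Import M8.

Set Implicit Arguments.
Unset Strict Implicit.
Unset Printing Implicit Defensive.
Import Order.TTheory GRing.Theory Num.Theory.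

Theorem theorem5p23 (Sig : finType) (psi : {ffun Sig -> nat} -> bool) :
  detection psi ->
  exists (S : finType) (Rs : seq (rxn S)) (iota : Sig -> S) (F : S) (Y0 Y1 : {set S}),
    wf_CRN Rs /\ injective iota /\ (forall s, iota s != F) /\ [disjoint Y0 & Y1] /\
    haltingly_decides Rs iota F Y0 Y1 psi /\
    halts_with_only_voters Rs iota F Y0 Y1 /\
        (forall vol : nat -> real, volume_Theta_n vol ->
           exists (C : real) (N : nat), forall n : nat, (N <= n)%N ->
             (RT_halt Rs iota F vol n <= (C * ln (n%:R : real))%:E)%E).
Proof.
move=> Hdet.
exists (Sp Sig), (Rs Sig), (@iotaS Sig), (Fs Sig), (Y0 psi), (Y1 psi).
split; first exact: wf_Rs.
split; first exact: iota_inj.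
split; first exact: iota_F.
split; first exact: disj_Y.
split; first exact: decides.
split; first exact: voters.
move=> vol [a [b [a0 [b0 Hvol]]]].
exists ((4 * #|Sig|%:R * b + 1)%R), 4%N => n Hn4.
have n1 : (1 <= n)%N by apply: leq_trans Hn4.
have [Hva Hvb] := andP (Hvol n n1).
set v := vol n in Hva Hvb *.
have v0 : (0 < v)%R by apply: lt_le_trans Hva; rewrite mulr_gt0 // ltr0n.
have HL := ln_ge1 Hn4.
set L := ln (n%:R : real) in HL *.
set S := ((#|Sig|)%:R : real)%R.
have S0 : (0 <= S)%R by apply: ler0n.
have Hb : (v / n%:R <= b)%R by rewrite ler_pdivrMr ?ltr0n.
have HG : (Gf n v n <= 2 * b * (1 + L))%R.
  apply: le_trans (Gf_n_le n v0) _.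
  have := Hn_le n1; rewrite -/L => HH.
  have H0 : (0 <= Hn n)%R by apply: sumr_ge0 => j _; rewrite invr_ge0 ler0n.
  have h1 := ler_pM (divr_ge0 (ltW v0) (ler0n _ _)) H0 Hb HH.
  move: h1; lra.
rewrite /RT_halt; apply: (le_trans (ereal_inf_lbound _)).
  exists (@rho Sig); split; last reflexivity.
  by move=> c j; rewrite /rho finset.in_set.
apply: ge_ereal_sup => z [c0 [cs [als [sigma [Hv [Hm [Hex [Hf [Hsig ->]]]]]]]]].
have Hn1 : (0 < msize c0)%N by rewrite Hm.
apply: le_trans (RT_bound v0 Hex Hf Hsig Hn1) _.
rewrite lee_fin Hm.
have HPsi : (Psi n v c0 <= S * Gf n v n)%R.
  rewrite /Psi; apply: (@le_trans _ _ (\sum_(s : Sig) Gf n v n)%R).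
    apply: ler_sum => s _; apply: (Gf_mono n v0); rewrite -Hm; exact: u_le.
  by rewrite sumr_const mulr_natl /S.
have hp : (0 <= S * b * (L - 1))%R by rewrite mulr_ge0 ?mulr_ge0 ?(ltW b0) // subr_ge0.
have := ler_wpM2l S0 HG; move: HPsi HL hp; lra.
Qed.
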